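(* Let $\mathcal{G}$ be a MAG with vertices $[n]$ numbered in a topological order. For each $i$, let $\mathbb{L}_i$ consist of (a) the independence $i\perp[i-1]\setminus\mathrm{mb}(i,[i])\mid\mathrm{mb}(i,[i])$, and (b) for every head $H\neq\{i\}$ whose maximal element is $i$ and every $k\in H\setminus\{i\}$, the independence $i\perp (H\cup T)\setminus(H'\cup T'\cup\{k\})\mid (H'\cup T')\setminus\{i\}$, where $H\to^{\{k\}}H'$, $T=\mathrm{tail}(H)$ and $T'=\mathrm{tail}(H')$. Then the collection $\mathbb{L}=\bigcup_i\mathbb{L}_i$ is equivalent to the collection of independences given by the ordered local Markov property for $\mathcal{G}$ (each can be derived from the other using the semi-graphoid axioms).
   Context: A MAG is an acyclic directed mixed graph (directed and bidirected edges, no directed cycles) with $\mathrm{sib}(v)\cap\mathrm{an}(v)=\emptyset$ for all $v$ and in which every nonadjacent pair is m-separated by some set. $[i]=\{1,\dots,i\}$, with ancestors having smaller labels. $\mathcal{G}_W$ is the induced subgraph, $\mathrm{dis}_W(v)$ the district of $v$ in $\mathcal{G}_W$. A set $A$ is ancestral if $\mathrm{an}(A)=A$; for ancestral $A$ and $v\in A$ with no child in $A$, $\mathrm{mb}(v,A)=(\mathrm{pa}_{\mathcal{G}_A}(\mathrm{dis}_A(v))\cup\mathrm{dis}_A(v))\setminus\{v\}$. The ordered local Markov property is the collection $v\perp A\setminus(\mathrm{mb}(v,A)\cup\{v\})\mid\mathrm{mb}(v,A)$ over all ancestral $A$ and childless $v\in A$. $\mathrm{barren}_{\mathcal{G}'}(W)=\{w\in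 W:\mathrm{de}_{\mathcal{G}'}(w)\cap W=\{w\}\}$; a nonempty $H$ is a head if $\mathrm{barren}(H)=H$ and $H$ lies in one district of $\mathcal{G}_{\mathrm{an}(H)}$; $\mathrm{tail}(H)=(\mathrm{dis}_{\mathrm{an}(H)}(H)\setminus H)\cup\mathrm{pa}(\mathrm{dis}_{\mathrm{an}(H)}(H))$. For a head $H$ with maximal element $i$ and $\emptyset\ne K\subseteq H\setminus\{i\}$, $H\to^KH'$ means $H'=\mathrm{barren}_{\mathcal{G}'}(\mathrm{dis}_{\mathcal{G}'}(i))$ with $\mathcal{G}'=\mathcal{G}_{\mathrm{an}(H)\setminus K}$. Semi-graphoid axioms: symmetry $X\perp Y|Z\iff Y\perp X|Z$; decomposition $X\perp YW|Z\Rightarrow X\perp Y|Z$; weak union $X\perp YW|Z\Rightarrow X\perp W|YZ$; contraction $X\perp Y|Z\ \&\ X\perp W|YZ\Rightarrow X\perp YW|Z$. *)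

(* Defs.v *)
(* Vertices of a MAG on [n] are represented by 'I_n:
   the vertex with label l in {1..n} is the ordinal l-1. *)
From mathcomp Require Import all_boot.
Set Implicit Arguments. Unset Strict Implicit. Unset Printing Implicit Defensive.

Section MAG.
Variable n : nat.
Notation V := 'I_n.
(* dir u v : there is a directed edge u -> v ;  bi u v : bidirected edge u <-> v *)
Variables (dir bi : rel V).

Definition adj (u v : V) : bool := [|| dir u v, dir v u | bi u v].
Definition collider (u v w : V) : bool :=
  (dir u v || bi u v) && (dir w v || bi w v).

Definition an (A : {set V}) : {set V} :=
  [set u | [exists v in A, connect dir u v]].
Definition ancestral (A : {set V}) : Prop := an A = A.

Definition mconnecting (a b : V) (Z : {set V}) (p : seq V) : Prop :=
  let s := a :: p in
  [/\ last a p = b, uniq s, path adj a p &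
   forall j, 0 < j < (size s).-1 ->
     let u := nth a s j.-1 in let v := nth a s j in let w := nth a s j.+1 in
     (collider u v w -> v \in an Z) /\ (~~ collider u v w -> v \notin Z)].

Definition msep (a b : V) (Z : {set V}) : Prop :=
  ~ exists p : seq V, mconnecting a b Z p.

Definition is_MAG : Prop :=
  [/\ (forall u v, bi u v = bi v u),
      (forall u v, dir u v -> ~ connect dir v u),
      (forall u v, bi u v -> ~ connect dir u v) &
      (forall u v, u != v -> ~~ adj u v ->
         exists Z : {set V}, [/\ u \notin Z, v \notin Z & msep u v Z])].

Definition topological : Prop := forall u v : V, dir u v -> u < v.

Definition dirW (W : {set V}) : rel V := [rel x y | [&& dir x y, x \in W & y \in W]].
Definition biW (W : {set V}) : rel V := [rel x y | [&& bi x y, x \in W & y \in W]].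

Definition barren (W S : {set V}) : {set V} :=
  [set s in S | [forall t in S, connect (dirW W) s t ==> (t == s)]].

Definition dis (W : {set V}) (v : V) : {set V} :=
  [set u in W | (v \in W) && connect (biW W) v u].
Definition disS (W S : {set V}) : {set V} := \bigcup_(v in S) dis W v.

Definition pa (W S : {set V}) : {set V} :=
  [set u in W | [exists s in S, (s \in W) && dir u s]].

Definition childless (v : V) (A : {set V}) : Prop := forall w, w \in A -> ~~ dir v w.

Definition mb (v : V) (A : {set V}) : {set V} :=
  (pa A (dis A v) :|: dis A v) :\ v.

Definition head (H : {set V}) : Prop :=
  [/\ H != set0, barren setT H = H &
      forall h h', h \in H -> h' \in H -> h' \in dis (an H) h].
Definition tail (H : {set V}) : {set V} :=
  (disS (an H) H :\: H) :|: pa (an H) (disS (an H) H).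

(* H ->^K H' where i is the maximal element of H *)
Definition arrow (H K : {set V}) (i : V) : {set V} :=
  let W := an H :\: K in barren W (dis W i).

(* independence statements X _||_ Y | Z *)
Definition indep := ({set V} * {set V} * {set V})%type.

Definition OLMP (t : indep) : Prop :=
  exists (A : {set V}) (v : V),
    [/\ ancestral A, v \in A, childless v A &
        t = ([set v], A :\: (mb v A :|: [set v]), mb v A)].

(* [i] = {j | j <= i}, [i-1] = {j | j < i} *)
Definition upto (i : V) : {set V} := [set j : V | j <= i].
Definition below (i : V) : {set V} := [set j : V | j < i].

Definition Lcoll (t : indep) : Prop :=
  exists i : V,
    t = ([set i], below i :\: mb i (upto i), mb i (upto i))
    \/ exists (H : {set V}) (k : V),
         let H' := arrow H [set k] i in
         [/\ head H, H != [set i], i \in H, (forall h, h \in H -> h <= i) &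
             [/\ k \in H, k != i &
             t = ([set i], (H :|: tail H) :\: (H' :|: tail H' :|: [set k]),
                  (H' :|: tail H') :\ i)]].

(* closure under the semi-graphoid axioms (plus triviality X _||_ {} | Z) *)
Inductive derivable (S : indep -> Prop) : indep -> Prop :=
| der_ax t : S t -> derivable S t
| der_triv X Z : derivable S (X, set0, Z)
| der_sym X Y Z : derivable S (X, Y, Z) -> derivable S (Y, X, Z)
| der_dec X Y W Z : derivable S (X, Y :|: W, Z) -> derivable S (X, Y, Z)
| der_wu X Y W Z : derivable S (X, Y :|: W, Z) -> derivable S (X, W, Y :|: Z)
| der_con X Y W Z : derivable S (X, Y, Z) -> derivable S (X, W, Y :|: Z) ->
                    derivable S (X, Y :|: W, Z).

End MAG.

(* Main.v *)
Require Import Defs.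
From mathcomp Require Import all_boot.
Set Implicit Arguments. Unset Strict Implicit. Unset Printing Implicit Defensive.

Ltac bfin := intros; repeat match goal with
  | H : _ |- _ => specialize (H isT)
  | H : is_true false |- _ => discriminate H
  | H : false = true |- _ => discriminate H
  end; try done.
Ltac isatom b := match b with
 | andb _ _ => fail 1 | orb _ _ => fail 1 | negb _ => fail 1 | implb _ _ => fail 1
 | addb _ _ => fail 1 | true => fail 1 | false => fail 1 | _ => idtac end.
Ltac bcase := rewrite ?(in_setU, in_setD, in_setI, in_set1, in_setC, in_set0, in_setT, eqxx); repeat (match goal with |- context [?b] =>
   match type of b with bool => isatom b; case: b end end); bfin.

Section S.
Variables (n : nat) (dir bi : rel 'I_n).

Lemma derivable_ext (S : indep n -> Prop) (X Y Z X' Y' Z' : {set 'I_n}) :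
  derivable S (X, Y, Z) -> X = X' -> Y = Y' -> Z = Z' -> derivable S (X', Y', Z').
Proof. by move=> h <- <- <-. Qed.

Lemma ddec (S : indep n -> Prop) (X Y Z Y' : {set 'I_n}) :
  derivable S (X, Y, Z) -> Y' \subset Y -> derivable S (X, Y', Z).
Proof.
move=> h sub; apply: (@der_dec _ _ X Y' (Y :\: Y') Z).
by apply: derivable_ext h _ _ _ => //; apply/setP=> x; move: (subsetP sub x); bcase.
Qed.

Lemma dwu (S : indep n -> Prop) (X Y Z W Z' : {set 'I_n}) :
  derivable S (X, Y, Z) -> W \subset Y -> Z' = (Y :\: W) :|: Z -> derivable S (X, W, Z').
Proof.
move=> h sub ->; apply: der_wu.
by apply: derivable_ext h _ _ _ => //; apply/setP=> x; move: (subsetP sub x); bcase.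
Qed.

Lemma dcon (S : indep n -> Prop) (X Y Z W Z2 Y2 : {set 'I_n}) :
  derivable S (X, Y, Z) -> derivable S (X, W, Z2) -> Z2 = Y :|: Z -> Y2 = Y :|: W ->
  derivable S (X, Y2, Z).
Proof. by move=> h1 h2 e1 e2; subst; apply: der_con. Qed.

Lemma dsym (S : indep n -> Prop) (X Y Z : {set 'I_n}) :
  derivable S (X, Y, Z) -> derivable S (Y, X, Z).
Proof. exact: der_sym. Qed.

Hypothesis bisym : forall u v, bi u v = bi v u.
Hypothesis top : topological dir.
Implicit Types (A B W S H C D : {set 'I_n}) (u v w x y : 'I_n).

Lemma connect_le u v : connect dir u v -> u <= v.
Proof.
case/connectP=> p; elim: p u => [|a p IH] u /=; first by move=> _ ->.
case/andP=> h1 h2 e; apply: leq_trans (ltnW (top h1)) (IH _ h2 e).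
Qed.

Lemma connect_restrict (T : finType) (e e' : rel T) (P : pred T) (x y : T) :
  P x -> (forall a b, P a -> e a b -> P b /\ e' a b) -> connect e x y -> connect e' x y.
Proof.
move=> Px H /connectP [p]; elim: p x Px => [|a p IH] x Px /=; first by move=> _ ->.
case/andP=> h1 h2 e1; case: (H _ _ Px h1) => Pa h3.
exact: connect_trans (connect1 h3) (IH _ Pa h2 e1).
Qed.

Lemma connect_dirW_dir W u v : connect (dirW dir W) u v -> connect dir u v.
Proof. by apply: connect_sub => x y /= /andP[h _]; apply: connect1. Qed.

Lemma anP A u : reflect (exists2 v, v \in A & connect dir u v) (u \in an dir A).
Proof. by rewrite inE; apply: (iffP existsP) => [[v /andP[]]|[v h1 h2]]; [exists v|exists v; apply/andP]. Qed.

Lemma an_sub A : A \subset an dir A.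
Proof. by apply/subsetP=> x xA; apply/anP; exists x. Qed.

Lemma an_mono A B : A \subset B -> an dir A \subset an dir B.
Proof. by move=> s; apply/subsetP=> x /anP[v vA c]; apply/anP; exists v => //; apply: (subsetP s). Qed.

Lemma ancP A u v : ancestral dir A -> connect dir u v -> v \in A -> u \in A.
Proof. by move=> hA c vA; rewrite -hA; apply/anP; exists v. Qed.

Lemma an_an A : an dir (an dir A) = an dir A.
Proof.
apply/setP=> x; apply/anP/anP => [[v /anP[w wA c2] c1]|[v vA c]].
  by exists w => //; apply: connect_trans c1 c2.
by exists x; [apply/anP; exists v|apply: connect0].
Qed.

Lemma connect_dirW A s t : ancestral dir A -> t \in A -> connect dir s t ->
  connect (dirW dir A) s t.
Proof.
move=> hA tA /connectP [p]; elim: p s => [|a p IH] s /=; first by move=> _ ->; apply: connect0.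
case/andP=> h1 h2 e1.
have aA : a \in A by apply: (ancP hA _ tA); apply/connectP; exists p.
have sA : s \in A by apply: (ancP hA (connect1 h1)).
by apply: connect_trans (IH _ h2 e1); apply: connect1; rewrite /dirW /= h1 sA aA.
Qed.

Lemma dis_sub W v : dis bi W v \subset W.
Proof. by apply/subsetP=> x; rewrite inE => /andP[]. Qed.

Lemma pa_sub W S : pa dir W S \subset W.
Proof. by apply/subsetP=> x; rewrite inE => /andP[]. Qed.

Lemma dis_self W v : v \in W -> v \in dis bi W v.
Proof. by move=> vW; rewrite inE vW connect0. Qed.

Lemma dis_restrict A W v : v \in W -> dis bi A v \subset W -> W \subset A ->
  dis bi W v = dis bi A v.
Proof.
move=> vW sD sW; apply/setP=> u; rewrite !inE vW (subsetP sW _ vW) /=.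
apply/andP/andP=> [[uW c]|[uA c]].
  split; first exact: (subsetP sW).
  by apply: connect_sub c => x y /= /and3P[h1 h2 h3]; apply: connect1; rewrite /biW /= h1 (subsetP sW _ h2) (subsetP sW _ h3).
split; first by apply: (subsetP sD); rewrite inE uA (subsetP sW _ vW).
apply: (@connect_restrict _ _ _ (fun x => x \in dis bi A v)) c.
  by rewrite dis_self // (subsetP sW).
move=> a b; rewrite !inE /biW /= => /and3P[aA vA ca] /and3P[h1 h2 h3].
have cb : connect (biW bi A) v b.
  by apply: (connect_trans ca); apply: connect1; rewrite /biW /= h1 h2 h3.
have aD : a \in dis bi A v by rewrite inE aA vA ca.
have bD : b \in dis bi A v by rewrite inE h3 vA cb.
by rewrite h3 vA cb h1 (subsetP sD _ aD) (subsetP sD _ bD).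
Qed.

Lemma biW_sym W : symmetric (biW bi W).
Proof. by move=> x y; rewrite /biW /= bisym; case: (bi y x); case: (x \in W); case: (y \in W). Qed.

Lemma dis_sym A u v : u \in dis bi A v -> dis bi A u = dis bi A v.
Proof.
rewrite inE => /and3P[uA vA c]; apply/setP=> x; rewrite !inE uA vA /=.
have cs := sym_connect_sym (biW_sym A).
apply/andP/andP=> [[xA c2]|[xA c2]]; split=> //.
  exact: connect_trans c c2.
by apply: connect_trans c2; rewrite cs.
Qed.


Lemma paE W S u : (u \in pa dir W S) = (u \in W) && [exists s in S, (s \in W) && dir u s].
Proof. by rewrite inE. Qed.

Lemma barren_sub W S : barren dir W S \subset S.
Proof. by apply/subsetP=> x; rewrite inE => /andP[]. Qed.

Lemma dis_sub_an A v : ancestral dir A -> dis bi A v \subset A.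
Proof. by move=> _; apply: dis_sub. Qed.

Section GL.
Variables (A : {set 'I_n}) (v : 'I_n).
Hypotheses (hA : ancestral dir A) (vA : v \in A) (cv : childless dir v A).
Let D := dis bi A v.
Let Hb := barren dir A D.

Lemma GL_vH : v \in Hb.
Proof.
rewrite inE dis_self //=; apply/forallP=> t; apply/implyP=> _; apply/implyP.
case/connectP=> [[|a p]] /=; first by move=> _ ->.
by case/andP=> /and3P[h1 _ h2]; move: (cv h2); rewrite h1.
Qed.

Lemma GL_HD : Hb \subset D.
Proof. exact: barren_sub. Qed.

Lemma GL_DanH : D \subset an dir Hb.
Proof.
apply/subsetP=> d dD.
case: (@arg_maxnP _ d (fun t => (t \in D) && connect (dirW dir A) d t) val) => [|t /andP[tD cdt] tmax].
  by rewrite dD connect0.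
apply/anP; exists t; last exact: connect_dirW_dir cdt.
rewrite inE tD /=; apply/forallP=> t'; apply/implyP => t'D; apply/implyP => ctt'.
have h1 : val t' <= val t by apply: tmax; rewrite t'D (connect_trans cdt ctt').
have h2 := connect_le (connect_dirW_dir ctt').
by apply/eqP; apply: val_inj; apply/eqP; rewrite eqn_leq h1 h2.
Qed.

Lemma GL_anA : an dir Hb \subset A.
Proof.
rewrite -{1}hA; apply: an_mono; apply: subset_trans GL_HD _; exact: dis_sub.
Qed.

Lemma GL_dis h : h \in Hb -> dis bi (an dir Hb) h = D.
Proof.
move=> hH; have hD := subsetP GL_HD _ hH.
have e := dis_sym hD.
rewrite (@dis_restrict A) ?e //; last exact: GL_anA.
  by apply: (subsetP GL_DanH).
exact: GL_DanH.
Qed.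

Lemma GL_disS : disS bi (an dir Hb) Hb = D.
Proof.
apply/setP=> x; apply/bigcupP/idP => [[h hH]|xD]; first by rewrite GL_dis.
by exists v; [exact: GL_vH|rewrite GL_dis //; exact: GL_vH].
Qed.

Lemma GL_pa : pa dir (an dir Hb) D = pa dir A D.
Proof.
apply/setP=> x; rewrite !paE; apply/andP/andP=> [[xa /existsP[s /andP[sD /andP[sa d]]]]|[xA /existsP[s /andP[sD /andP[sA d]]]]].
  split; first exact: (subsetP GL_anA).
  by apply/existsP; exists s; rewrite sD (subsetP GL_anA) // d.
have sa := subsetP GL_DanH _ sD.
split; last by apply/existsP; exists s; rewrite sD sa d.
case/anP: sa => t tH c; apply/anP; exists t => //.
exact: connect_trans (connect1 d) c.
Qed.

Lemma GL_tail : Hb :|: tail dir bi Hb = D :|: pa dir A D.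
Proof.
rewrite /tail GL_disS GL_pa; apply/setP=> x; move: (subsetP GL_HD x); bcase.
Qed.

Lemma GL_mb : mb dir bi v A = (Hb :|: tail dir bi Hb) :\ v.
Proof. by rewrite GL_tail /mb setUC. Qed.

Lemma GL_head : Defs.head dir bi Hb.
Proof.
split.
- by apply/set0Pn; exists v; exact: GL_vH.
- apply/setP=> x; rewrite [in LHS]inE; case xH: (x \in Hb) => //=.
  apply/forallP=> t; apply/implyP=> tH; apply/implyP=> c.
  move: xH; rewrite inE => /andP[_ /forallP /(_ t)].
  rewrite (subsetP GL_HD _ tH) /= => /implyP; apply.
  apply: connect_dirW => //; first by apply: (subsetP (dis_sub _ _)); apply: (subsetP GL_HD).
  exact: connect_dirW_dir c.
- by move=> h h' hH h'H; rewrite GL_dis //; apply: (subsetP GL_HD).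
Qed.

End GL.

Lemma upto_anc i : ancestral dir (upto i).
Proof.
rewrite /ancestral; apply/setP=> x; apply/anP/idP => [[y]|xi]; last by exists x => //; apply: connect0.
rewrite !inE => yi c; exact: leq_trans (connect_le c) yi.
Qed.

Lemma upto_childless i : childless dir i (upto i).
Proof. by move=> w; rewrite inE => wi; apply/negP=> d; have := top d; rewrite ltnNge wi. Qed.

Lemma tail_an H : H :|: tail dir bi H \subset an dir H.
Proof.
apply/subsetP=> x; rewrite /tail !in_setU in_setD => /orP[xH|/orP[/andP[_ /bigcupP[h _ xd]]|xp]].
- by apply/anP; exists x => //; apply: connect0.
- by apply: (subsetP (dis_sub _ _)) xd.
- by apply: (subsetP (pa_sub _ _)) xp.
Qed.

Lemma head_barren H s t : Defs.head dir bi H -> s \in H -> t \in H -> connect dir s t -> t = s.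
Proof.
case=> _ hb _ sH tH c.
move: sH; rewrite -hb inE => /andP[_ /forallP /(_ t)]; rewrite tH /= => /implyP h.
apply/eqP; apply: h; apply: connect_sub c => x y d; apply: connect1; by rewrite /dirW /= d !inE.
Qed.

Section Arrow.
Variables (H : {set 'I_n}) (i k : 'I_n).
Hypotheses (hH : Defs.head dir bi H) (iH : i \in H) (Hle : forall h, h \in H -> h <= i)
  (kH : k \in H) (ki : k != i).
Let W := an dir H :\: [set k].

Lemma AR_anc : ancestral dir W.
Proof.
rewrite /ancestral; apply/setP=> x; apply/anP/idP => [[y yW c]|xW]; last by exists x => //; apply: connect0.
move: yW; rewrite !in_setD !in_set1 => /andP[yk ya]; apply/andP; split.
  apply/negP=> /eqP xk; subst x.
  case/anP: ya => h hH' c2.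
  have hk := head_barren hH kH hH' (connect_trans c c2); subst h.
  have e1 := connect_le c; have e2 := connect_le c2.
  by move: yk; rewrite -val_eqE /= eqn_leq e1 e2.
by rewrite -an_an; apply/anP; exists y.
Qed.

Lemma AR_iW : i \in W.
Proof. by rewrite in_setD in_set1 eq_sym ki /=; apply/anP; exists i => //; apply: connect0. Qed.

Lemma AR_child : childless dir i W.
Proof.
move=> w; rewrite in_setD => /andP[_ /anP[h hH' c]]; apply/negP=> d.
have := leq_trans (top d) (leq_trans (connect_le c) (Hle hH')); by rewrite ltnn.
Qed.

Lemma AR_main : derivable (OLMP dir bi)
  ([set i], (H :|: tail dir bi H) :\: (arrow dir bi H [set k] i :|: tail dir bi (arrow dir bi H [set k] i) :|: [set k]),
     (arrow dir bi H [set k] i :|: tail dir bi (arrow dir bi H [set k] i)) :\ i).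
Proof.
have hA := AR_anc; have iW := AR_iW; have ci := AR_child.
have e := GL_mb hA iW ci.
have iH' := GL_vH iW ci.
rewrite /arrow -/W -e.
apply: ddec; first by apply: der_ax; exists W, i; split.
apply/subsetP=> x; rewrite e; move: (subsetP (tail_an H) x).
case: (eqVneq x i) => [->|xi]; first by move: iH'; bcase.
by move: xi; rewrite /W; bcase.
Qed.

End Arrow.

Lemma dir1 t : Lcoll dir bi t -> derivable (OLMP dir bi) t.
Proof.
case=> i [->|[H [k [hH Hi iH Hle [kH ki ->]]]]].
  apply: der_ax; exists (upto i), i; split.
  - exact: upto_anc.
  - by rewrite inE.
  - exact: upto_childless.
  congr (_, _, _); apply/setP=> x; rewrite !inE ltn_neqAle val_eqE; bcase.
exact: AR_main.
Qed.

Definition trip A u : indep n := ([set u], A :\: (mb dir bi u A :|: [set u]), mb dir bi u A).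
Definition Cl A u := dis bi A u :|: pa dir A (dis bi A u).
Notation L := (Lcoll dir bi).

Lemma mbE A u : mb dir bi u A = Cl A u :\ u.
Proof. by rewrite /mb /Cl setUC. Qed.

Lemma dis_mono W A u : W \subset A -> dis bi W u \subset dis bi A u.
Proof.
move=> sW; apply/subsetP=> x; rewrite !inE => /and3P[xW uW c].
rewrite (subsetP sW _ xW) (subsetP sW _ uW) /=.
by apply: connect_sub c => a b /and3P[h1 h2 h3]; apply: connect1; rewrite /biW /= h1 (subsetP sW _ h2) (subsetP sW _ h3).
Qed.

Lemma pa_mono W A S S' : W \subset A -> S \subset S' -> pa dir W S \subset pa dir A S'.
Proof.
move=> sW sS; apply/subsetP=> x; rewrite !paE => /andP[xW /existsP[s /and3P[sS1 sW1 d]]].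
rewrite (subsetP sW _ xW); apply/existsP; exists s.
by rewrite (subsetP sS _ sS1) (subsetP sW _ sW1) d.
Qed.

Lemma Cl_sub A u : Cl A u \subset A.
Proof. by rewrite /Cl subUset dis_sub pa_sub. Qed.

Lemma Cl_mono W A u : W \subset A -> Cl W u \subset Cl A u.
Proof. by move=> sW; rewrite /Cl setUSS // ?dis_mono // pa_mono // dis_mono. Qed.

Lemma Cl_self A u : u \in A -> u \in Cl A u.
Proof. by move=> uA; rewrite in_setU dis_self. Qed.

Lemma childless_sub u A B : childless dir u A -> B \subset A -> childless dir u B.
Proof. by move=> c s w wB; apply: c; apply: (subsetP s). Qed.

Lemma anc_rm_max A v : ancestral dir A -> (forall x, x \in A -> x <= v) -> ancestral dir (A :\ v).
Proof.
move=> hA le; rewrite /ancestral; apply/setP=> x; apply/anP/idP => [[y]|xW]; last by exists x => //; apply: connect0.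
rewrite !in_setD1 => /andP[yv yA] c; rewrite (ancP hA c yA) andbT.
apply/negP=> /eqP xv; subst x; move: yv; rewrite -val_eqE /= eqn_leq (le _ yA) (connect_le c).
done.
Qed.

Lemma childless_max A v : (forall x, x \in A -> x <= v) -> childless dir v A.
Proof. by move=> le w wA; apply/negP=> d; have := leq_trans (top d) (le _ wA); rewrite ltnn. Qed.

Lemma Cl_notin_child A u m : childless dir m A -> m \notin dis bi A u -> m \notin Cl A u.
Proof.
move=> cm mD; rewrite in_setU (negbTE mD) paE /=; apply/negP=> /andP[mA /existsP[s /and3P[_ sA d]]].
by move: (cm _ sA); rewrite d.
Qed.

Lemma nonmax A m u : ancestral dir A -> m \in A -> (forall x, x \in A -> x <= m) ->
  u \in A -> childless dir u A -> u != m ->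
  derivable L (trip A m) -> derivable L (trip (A :\ m) u) -> derivable L (trip A u).
Proof.
move=> hA mA le uA cu um Pm Pu.
have cm := childless_max le.
have ClA := Cl_sub A u.
have uCl := Cl_self uA.
have um' : m != u by rewrite eq_sym.
rewrite /trip !mbE in Pm Pu *.
case: (boolP (m \in dis bi A u)) => mD; last first.
  have eD : dis bi (A :\ m) u = dis bi A u.
    apply: dis_restrict; first by rewrite in_setD1 um.
      apply/subsetP=> x xD; rewrite in_setD1 (subsetP (dis_sub _ _) _ xD) andbT.
      by apply/negP=> /eqP xm; subst x; rewrite xD in mD.
    exact: subsetDl.
  have eC : Cl (A :\ m) u = Cl A u.
    rewrite /Cl eD; congr (_ :|: _); apply/setP=> x; rewrite !paE in_setD1.
    case: (eqVneq x m) => [->|xm] /=.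
      apply/esym/negbTE; apply/negP => /andP[_ /existsP[s /and3P[sD sA d]]].
      by move: (cm s sA); rewrite d.
    congr (_ && _); apply: eq_existsb => s; case sD: (s \in dis bi A u) => //=.
    rewrite in_setD1 (subsetP (dis_sub _ _) _ sD) andbT.
    case: (eqVneq s m) => [e|_] //=; by move: sD; rewrite e => sD; rewrite sD in mD.
  rewrite eC in Pu.
  have mC := Cl_notin_child cm mD.
  have uDm : u \notin Cl A m.
    rewrite in_setU negb_or; apply/andP; split.
      by apply/negP=> h; move: (dis_sym h) mD => ->; rewrite dis_self.
    rewrite paE; apply/negP=> /andP[_ /existsP[s /and3P[_ sA d]]].
    by move: (cu s sA); rewrite d.
  have ClmA := Cl_sub A m.
  have s1 := dsym (dwu (W := [set u]) Pm _ (erefl _)).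
  apply: (dcon Pu (s1 _)).
  - apply/subsetP=> x; rewrite in_set1 => /eqP ->.
    by move: uA um um' uDm; bcase.
  - apply/setP=> x; move: (subsetP ClA x) (subsetP ClmA x); case: (eqVneq x u) => [->|xu]; first by move: uA um um' uCl uDm; bcase.
    case: (eqVneq x m) => [->|xm]; first by move: mA mC; bcase.
    by move: xu xm; bcase.
  - apply/setP=> x; move: (subsetP ClA x); case: (eqVneq x u) => [->|xu]; first by move: uA um um' uCl; bcase.
    case: (eqVneq x m) => [->|xm]; first by move: mA mC um um'; bcase.
    by move: xu xm; bcase.
have eD : dis bi A m = dis bi A u by apply: dis_sym.
have eC : Cl A m = Cl A u by rewrite /Cl eD.
rewrite eC in Pm.
have mC : m \in Cl A u by rewrite in_setU mD.
have sC := Cl_mono u (subsetDl A [set m]).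
have mC' : m \notin Cl (A :\ m) u.
  by apply/negP=> h; move: (subsetP (Cl_sub _ _) _ h); rewrite in_setD1 eqxx.
have uC' : u \in Cl (A :\ m) u by apply: Cl_self; rewrite in_setD1 um.
set C := Cl A u in Pm ClA uCl mC sC *.
set C' := Cl (A :\ m) u in Pu sC mC' uC' *.
set R := A :\: C.
have t1 : derivable L ([set u], R, C :\ u :\ m).
  apply: (dwu Pu).
    apply/subsetP=> x; move: (subsetP sC x); rewrite /R; case: (eqVneq x u) => [->|xu]; first by move: uCl; bcase.
    case: (eqVneq x m) => [->|xm]; first by move: mC; bcase.
    by move: xu xm; bcase.
  apply/setP=> x; move: (subsetP sC x) (subsetP ClA x); rewrite /R; case: (eqVneq x u) => [->|xu]; first by move: uCl uA mC' um um' uC'; bcase.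
  case: (eqVneq x m) => [->|xm]; first by move: mC mA mC' um um'; bcase.
  by move: xu xm; bcase.
have Pm' : derivable L (R, [set m], C :\ m).
  apply: dsym; apply: derivable_ext Pm _ _ _ => //.
  apply/setP=> x; rewrite /R; case: (eqVneq x m) => [->|xm]; first by move: mC; bcase.
  by move: xm; bcase.
have t2 : derivable L (R, [set u] :|: [set m], C :\ u :\ m).
  apply: (dcon (dsym t1) Pm') => //.
  apply/setP=> x; case: (eqVneq x u) => [->|xu]; first by move: uCl um um'; bcase.
  case: (eqVneq x m) => [->|xm]; first by move: mC um um'; bcase.
  by move: xu xm; bcase.
have t3 : derivable L (R, [set u], C :\ u).
  apply: (dwu t2); first exact: subsetUl.
  apply/setP=> x; case: (eqVneq x u) => [->|xu]; first by move: uCl um um'; bcase.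
  case: (eqVneq x m) => [->|xm]; first by move: mC um um'; bcase.
  by move: xu xm; bcase.
apply: derivable_ext (dsym t3) _ _ _ => //.
apply/setP=> x; rewrite /R; case: (eqVneq x u) => [->|xu]; first by move: uCl; bcase.
by move: xu; bcase.
Qed.

Lemma maxstep A v w :
  ancestral dir A -> v \in A -> (forall x, x \in A -> x <= v) ->
  w \notin A -> w <= v -> (forall y : 'I_n, y <= v -> y \notin A -> w <= y) ->
  derivable L (trip (w |: A) v) -> derivable L (trip ((w |: A) :\ v) w) -> derivable L (trip A v).
Proof.
move=> hA vA le wA wle wmin P1 P4.
set A' := w |: A.
have wv : w != v by apply/negP=> /eqP e; rewrite e vA in wA.
have vw : v != w by rewrite eq_sym.
have sAA' : A \subset A' by apply: subsetUr.
have vA' : v \in A' by rewrite (subsetP sAA').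
have wA' : w \in A' by rewrite !inE eqxx.
have le' : forall x, x \in A' -> x <= v.
  by move=> x; rewrite !inE => /orP[/eqP ->|]; [exact: wle|exact: le].
have hA' : ancestral dir A'.
  rewrite /ancestral; apply/setP=> x; apply/anP/idP => [[y yA' c]|xA']; last by exists x => //; apply: connect0.
  move: yA'; rewrite /A' in_setU1 => /orP[/eqP yw|yA]; last by rewrite in_setU1 (ancP hA c yA) orbT.
  subst y; rewrite in_setU1; case: (eqVneq x w) => //= xw.
  apply/negPn/negP=> xA.
  have h1 := connect_le c.
  have h2 := wmin x (leq_trans h1 wle) xA.
  by move: xw; rewrite -val_eqE /= eqn_leq h1 h2.
have cw : childless dir w A'.
  move=> y; rewrite /A' in_setU1 => /orP[/eqP ->|yA]; apply/negP=> d.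
    by have := top d; rewrite ltnn.
  by move: wA; rewrite (ancP hA (connect1 d) yA).
have cvA := childless_max le.
have cvA' := childless_max le'.
have sCC : Cl A v \subset Cl A' v by apply: Cl_mono.
have CA := Cl_sub A v.
have C'A' := Cl_sub A' v.
have vC := Cl_self vA.
have vC' := Cl_self vA'.
have wC : w \notin Cl A v by apply/negP=> h; rewrite (subsetP CA _ h) in wA.
rewrite /trip !mbE in P1 P4 *.
case: (boolP (w \in dis bi A' v)) => wD; last first.
  have eD : dis bi A v = dis bi A' v.
    apply: dis_restrict => //.
    apply/subsetP=> x xD; have := subsetP (dis_sub _ _) _ xD; rewrite /A' in_setU1.
    by case/orP=> // /eqP e; move: wD; rewrite -e xD.
  have eC : Cl A v = Cl A' v.
    rewrite /Cl eD; congr (_ :|: _); apply/setP=> x; rewrite !paE /A' in_setU1.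
    case: (eqVneq x w) => [->|xw] /=.
      rewrite (negbTE wA); apply/esym/negbTE; apply/negP=> /existsP[s /and3P[_ sA d]].
      by move: (cw s sA); rewrite d.
    congr (_ && _); apply: eq_existsb => s; case sD: (s \in dis bi A' v) => //=.
    rewrite in_setU1; case: (eqVneq s w) => [e|] //=.
    by move: sD; rewrite e => sD; rewrite sD in wD.
  rewrite eC; apply: (ddec P1); apply/subsetP=> x; rewrite /A'; bcase.
have eDw : dis bi A' w = dis bi A' v by apply: dis_sym.
set H := barren dir A' (dis bi A' v).
have wH : w \in H by rewrite /H -eDw; apply: GL_vH.
have vH : v \in H by apply: GL_vH.
have hH : Defs.head dir bi H by apply: GL_head.
have eHT : H :|: tail dir bi H = Cl A' v by rewrite GL_tail.
set W := an dir H :\: [set w].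
have anHA' : an dir H \subset A' by apply: GL_anA.
have WA : W \subset A.
  apply/subsetP=> x; rewrite in_setD in_set1 => /andP[xw xa].
  by move: (subsetP anHA' _ xa); rewrite /A' in_setU1 (negbTE xw).
have DW : dis bi A v \subset W.
  apply/subsetP=> x xD; rewrite in_setD in_set1.
  have xD' := subsetP (dis_mono v sAA') _ xD.
  rewrite (subsetP (GL_DanH _ _) _ xD') andbT.
  by apply/negP=> /eqP e; move: (subsetP (dis_sub _ _) _ xD); rewrite e (negbTE wA).
have vW : v \in W by apply: (subsetP DW); apply: dis_self.
have hW : ancestral dir W.
  rewrite /ancestral; apply/setP=> x; apply/anP/idP => [[y yW c]|xW]; last by exists x => //; apply: connect0.
  have yA := subsetP WA _ yW.
  move: yW; rewrite /W !in_setD !in_set1 => /andP[_ ya].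
  apply/andP; split; last by rewrite -an_an; apply/anP; exists y.
  apply/negP=> /eqP xw; subst x.
  case/connectP: c => [[|a p]] /=; first by move=> _ e; rewrite -e yA in wA.
  case/andP=> d pth e.
  have aA : a \in A by apply: (ancP hA _ yA); apply/connectP; exists p.
  by move: (cw a (subsetP sAA' _ aA)); rewrite d.
have cvW : childless dir v W by apply: childless_sub cvA WA.
have eDW : dis bi W v = dis bi A v by apply: dis_restrict.
have ePW : pa dir W (dis bi A v) = pa dir A (dis bi A v).
  apply/eqP; rewrite eqEsubset pa_mono //=.
  apply/subsetP=> x; rewrite !paE => /andP[xA /existsP[s /and3P[sD sA d]]].
  have sW := subsetP DW _ sD.
  apply/andP; split; last by apply/existsP; exists s; rewrite sD sW d.
  rewrite /W in_setD in_set1; apply/andP; split.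
    by apply/negP=> /eqP e; move: wA; rewrite -e xA.
  move: sW; rewrite /W in_setD => /andP[_ /anP[t tH c]].
  by apply/anP; exists t => //; apply: connect_trans (connect1 d) c.
have eH'T : arrow dir bi H [set w] v :|: tail dir bi (arrow dir bi H [set w] v) = Cl A v.
  by rewrite /arrow -/W GL_tail // eDW ePW.
have P2 : derivable L ([set v], Cl A' v :\: (Cl A v :|: [set w]), Cl A v :\ v).
  apply: der_ax; exists v; right; exists H, w.
  rewrite -eHT -eH'T; split => //.
  - by apply/negP=> /eqP e; move: wH; rewrite e in_set1 (negbTE wv).
  - move=> h hH'; apply: le'; apply: (subsetP (dis_sub _ _)); exact: (subsetP (GL_HD _ _) _ hH').
set C := Cl A v in sCC CA vC wC eH'T P2 *.
set C' := Cl A' v in sCC C'A' vC' eHT P1 P2 *.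
have wC' : w \in C' by rewrite /C' in_setU wD.
set E := A' :\ v.
have hE : ancestral dir E by apply: anc_rm_max.
have CEC' : Cl E w \subset C'.
  have -> : C' = Cl A' w by rewrite /C' /Cl eDw.
  by apply: Cl_mono; apply: subsetDl.
have CEE := Cl_sub E w.
set R := A :\: C'.
have a1 : derivable L ([set w], R, C' :\ v :\ w).
  apply: (dwu P4).
    apply/subsetP=> x; move: (subsetP CEC' x); rewrite /R /E /A'.
    case: (eqVneq x v) => [->|xv]; first by move: vC'; bcase.
    case: (eqVneq x w) => [->|xw]; first by move: wA; bcase.
    by move: xv xw; bcase.
  apply/setP=> x; move: (subsetP CEC' x) (subsetP CEE x) (subsetP C'A' x); rewrite /R /E /A'.
  case: (eqVneq x v) => [->|xv]; first by move: vC' vA wv vw; bcase.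
  case: (eqVneq x w) => [->|xw]; first by move: wA wC' wv vw; bcase.
  by move: xv xw; bcase.
have a2 : derivable L (R, [set v], C' :\ v).
  apply: dsym; apply: derivable_ext P1 _ _ _ => //.
  apply/setP=> x; rewrite /R /A'.
  case: (eqVneq x v) => [->|xv]; first by move: vC'; bcase.
  case: (eqVneq x w) => [->|xw]; first by move: wA wC'; bcase.
  by move: xv xw; bcase.
have a3 : derivable L (R, [set w] :|: [set v], C' :\ v :\ w).
  apply: (dcon (dsym a1) a2) => //.
  apply/setP=> x; case: (eqVneq x v) => [->|xv]; first by move: vC' wv vw; bcase.
  case: (eqVneq x w) => [->|xw]; first by move: wC' wv vw; bcase.
  by move: xv xw; bcase.
have a4 : derivable L ([set v], R, C' :\ v :\ w).
  by apply: dsym; apply: (ddec a3); apply: subsetUr.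
apply: derivable_ext (dcon P2 a4 _ (erefl _)) _ _ _ => //.
  apply/setP=> x; move: (subsetP C'A' x) (subsetP CA x) (subsetP sCC x); rewrite /R /A'.
  case: (eqVneq x v) => [->|xv]; first by move: vC vC' vA wv vw; bcase.
  case: (eqVneq x w) => [->|xw]; first by move: wA wC wC' wv vw; bcase.
  by move: xv xw; bcase.
apply/setP=> x; move: (subsetP C'A' x) (subsetP CA x) (subsetP sCC x); rewrite /R /A'.
case: (eqVneq x v) => [->|xv]; first by move: vC vC' vA wv vw; bcase.
case: (eqVneq x w) => [->|xw]; first by move: wA wC wC' wv vw; bcase.
by move: xv xw; bcase.
Qed.

Lemma add_min B v w : ancestral dir B -> w \notin B -> w <= v ->
  (forall y : 'I_n, y <= v -> y \notin B -> w <= y) ->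
  ancestral dir (w |: B) /\ childless dir w (w |: B).
Proof.
move=> hA wA wle wmin; split.
  rewrite /ancestral; apply/setP=> x; apply/anP/idP => [[y yA' c]|xA']; last by exists x => //; apply: connect0.
  move: yA'; rewrite in_setU1 => /orP[/eqP yw|yA]; last by rewrite in_setU1 (ancP hA c yA) orbT.
  subst y; rewrite in_setU1; case: (eqVneq x w) => //= xw.
  apply/negPn/negP=> xA.
  have h1 := connect_le c.
  have h2 := wmin x (leq_trans h1 wle) xA.
  by move: xw; rewrite -val_eqE /= eqn_leq h1 h2.
move=> y; rewrite in_setU1 => /orP[/eqP ->|yA]; apply/negP=> d.
  by have := top d; rewrite ltnn.
by move: wA; rewrite (ancP hA (connect1 d) yA).
Qed.

Lemma upto_below i : below i :\: mb dir bi i (upto i) = upto i :\: (mb dir bi i (upto i) :|: [set i]).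
Proof.
by apply/setP=> x; rewrite !inE ltn_neqAle val_eqE; bcase.
Qed.

Lemma main_ind (m : nat) : forall A, ancestral dir A -> (forall x, x \in A -> x < m) ->
  forall u, u \in A -> childless dir u A -> derivable L (trip A u).
Proof.
elim: m => [|m IHo] A hA lt u uA cu; first by have := lt _ uA.
case: (pickP (fun v : 'I_n => (v \in A) && (val v == m))) => [v /andP[vA /eqP vm]|none]; last first.
  apply: IHo => // x xA; have := lt _ xA; rewrite ltnS leq_eqVlt => /orP[/eqP e|//].
  by move: (none x); rewrite xA /= => /negbT/eqP h; exfalso; apply: h.
have le : forall x, x \in A -> x <= v by move=> x xA; rewrite vm -ltnS lt.
have IHo' : forall B, ancestral dir B -> (forall x, x \in B -> x <= v) -> v \notin B ->
    forall u, u \in B -> childless dir u B -> derivable L (trip B u).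
  move=> B hB leB vB; apply: IHo => // x xB; rewrite -vm ltn_neqAle leB // andbT val_eqE.
  by apply/negP => /eqP e; rewrite -e xB in vB.
suff key : forall k B, #|upto v :\: B| < k -> ancestral dir B -> v \in B ->
    (forall x, x \in B -> x <= v) -> forall u, u \in B -> childless dir u B -> derivable L (trip B u).
  exact: (key _ A (ltnSn _) hA vA le u uA cu).
elim=> [//|k IHk] B cardB hB vB leB.
have Pv : derivable L (trip B v).
  case: (eqVneq B (upto v)) => [eB|nB].
    subst B; apply: der_ax; exists v; left; rewrite /trip; congr (_, _, _).
    by rewrite upto_below.
  have [w0 w0U w0B] : exists2 w0, w0 \in upto v & w0 \notin B.
    case: (pickP (fun w => (w \in upto v) && (w \notin B))) => [w /andP[]|none]; first by exists w.
    move: nB; rewrite /= => /eqP; case; apply/setP=> x; rewrite inE.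
    apply/idP/idP => [xB|xle]; first exact: leB.
    by move: (none x); rewrite inE xle /= => /negbFE.
  case: (@arg_minnP _ w0 (fun w => (w \in upto v) && (w \notin B)) val) => [|w /andP[wU wB] wmin].
    by rewrite w0U w0B.
  have wle : w <= v by rewrite inE in wU.
  have wmin' : forall y : 'I_n, y <= v -> y \notin B -> w <= y.
    by move=> y yv yB; apply: wmin; rewrite inE yv yB.
  have [hA' cw] := add_min hB wB wle wmin'.
  have le' : forall x, x \in w |: B -> x <= v.
    by move=> x; rewrite in_setU1 => /orP[/eqP ->|]; [exact: wle|exact: leB].
  apply: (maxstep hB vB leB wB wle wmin').
    apply: IHk => //.
    - rewrite -ltnS; apply: leq_trans cardB; rewrite ltnS; apply: proper_card.
      apply/properP; split; first by apply: setDS; apply: subsetUr.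
      by exists w; rewrite !in_setD ?in_setU1 ?eqxx /= ?wU ?wB.
    - by rewrite in_setU1 vB orbT.
    - by rewrite in_setU1 vB orbT.
    - exact: (childless_max le').
  apply: IHo'.
  - exact: anc_rm_max.
  - by move=> x; rewrite in_setD1 => /andP[_ /le'].
  - by rewrite in_setD1 eqxx.
  - by rewrite in_setD1 in_setU1 eqxx andbT; apply/negP=> /eqP e; rewrite e vB in wB.
  - by apply: childless_sub cw (subsetDl _ _).
move=> u' uB cu'.
case: (eqVneq u' v) => [->//|uv].
apply: (nonmax hB vB leB uB cu' uv Pv).
apply: IHo' => //.
- exact: anc_rm_max.
- by move=> x; rewrite in_setD1 => /andP[_ /leB].
- by rewrite in_setD1 eqxx.
- by rewrite in_setD1 uv.
- by apply: childless_sub cu' (subsetDl _ _).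
Qed.
End S.

Theorem theoremD6 (n : nat) (dir bi : rel 'I_n) :
  is_MAG dir bi -> topological dir ->
  (forall t, Lcoll dir bi t -> derivable (OLMP dir bi) t) /\
  (forall t, OLMP dir bi t -> derivable (Lcoll dir bi) t).
Proof.
case=> bs _ _ _ tp; split.
  by move=> t; apply: dir1.
move=> t [A [v [hA vA cv ->]]].
by apply: (main_ind bs tp (m := n)) => // x _; apply: ltn_ord.

Qed.
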